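(* Let $P$ be a finite set of points in $\mathbb{R}^m$, let $(A,B)$ be an optimal 2-means partition of $P$, and let $S\subseteq A$ be the set of low-revenue points of $A$. Then for any $u,v\in S$, $d(u,v)\le\frac29\max\{d(u,\rho(A)),d(v,\rho(A))\}$.
   Context: Distances are Euclidean: $d(x,y)=\|x-y\|_2$. For finite nonempty $S$, $\rho(S)=\frac{1}{|S|}\sum_{u\in S}u$ and $\Delta_1(S)=\sum_{u\in S}d(u,\rho(S))^2$. A partition $(A,B)$ of $P$ into two nonempty sets is an optimal 2-means partition if it minimizes $\Delta_1(A)+\Delta_1(B)$ among all partitions of $P$ into two nonempty sets. For $i\in A$, $j\in B$, $rev(i,j)=\min\{d(i,j)/\max\{d(i,\rho(A)),d(j,\rho(B))\},\,1\}$ (equal to $1$ if the maximum is $0$). For $u\in A$, $HR_B(u)=\{v\in B: rev(u,v)\ge\frac{1}{10}\}$ and $LR_B(u)=B\setminus HR_B(u)$. A point $u\in A$ is a high-revenue point if $|HR_B(u)|\ge\frac12|B|$, and a low-revenue point otherwise. *)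

(* Defs.v *)
From HB Require Import structures.
From mathcomp Require Import all_boot all_order all_algebra finmap.
From mathcomp Require Import reals.
Set Implicit Arguments. Unset Strict Implicit. Unset Printing Implicit Defensive.
Import Order.TTheory GRing.Theory Num.Theory.
Local Open Scope ring_scope.
Local Open Scope fset_scope.

Section KMeans.
Variables (R : realType) (m : nat).
Notation pt := 'rV[R]_m.

Definition dist (x y : pt) : R :=
  Num.sqrt (\sum_(i < m) (x ord0 i - y ord0 i) ^+ 2).

Definition centroid (S : {fset pt}) : pt :=
  (#|` S|%:R)^-1 *: \sum_(u <- S) u.

Definition cost1 (S : {fset pt}) : R :=
  \sum_(u <- S) dist u (centroid S) ^+ 2.

Definition is_2partition (P A B : {fset pt}) : Prop :=
  [/\ A `|` B = P, A `&` B = fset0, A != fset0 & B != fset0].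

Definition optimal_2means (P A B : {fset pt}) : Prop :=
  is_2partition P A B /\
  forall A' B' : {fset pt}, is_2partition P A' B' ->
    (cost1 A + cost1 B <= cost1 A' + cost1 B')%R.

Definition revenue (A B : {fset pt}) (i j : pt) : R :=
  let M := Num.max (dist i (centroid A)) (dist j (centroid B)) in
  if M == 0 then 1 else Num.min (dist i j / M) 1.

Definition HR (A B : {fset pt}) (u : pt) : {fset pt} :=
  [fset v in B | (10%:R)^-1 <= revenue A B u v].

Definition high_revenue (A B : {fset pt}) (u : pt) : Prop :=
  (#|` B|%:R / 2%:R <= (#|` HR A B u|%:R : R))%R.

Definition low_revenue (A B : {fset pt}) (u : pt) : Prop :=
  u \in A /\ ~ high_revenue A B u.

End KMeans.

(* Main.v *)
Require Import Defs.
From HB Require Import structures.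
From mathcomp Require Import all_boot all_order all_algebra finmap.
From mathcomp Require Import reals.
From mathcomp Require Import ring lra.
Import Order.TTheory GRing.Theory Num.Theory.
Local Open Scope ring_scope.
Local Open Scope fset_scope.

Section Aux.
Variables (R : realType) (m : nat).
Notation pt := 'rV[R]_m.
Local Open Scope ring_scope.

Definition sqd (x y : pt) : R := \sum_(i < m) (x ord0 i - y ord0 i) ^+ 2.

Lemma sqd_ge0 (x y : pt) : 0 <= sqd x y.
Proof. by apply: sumr_ge0 => i _; apply: sqr_ge0. Qed.

Lemma dist_sq (x y : pt) : dist x y ^+ 2 = sqd x y.
Proof. by rewrite /dist sqr_sqrtr // sqd_ge0. Qed.

Lemma dist_ge0 (x y : pt) : 0 <= dist x y.
Proof. exact: sqrtr_ge0. Qed.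

Lemma distC (x y : pt) : dist x y = dist y x.
Proof.
rewrite /dist; congr Num.sqrt; apply: eq_bigr => i _.
by rewrite -sqrrN opprB.
Qed.

Lemma dist_xx (x : pt) : dist x x = 0.
Proof.
rewrite /dist big1 ?sqrtr0 // => i _; by rewrite subrr expr0n.
Qed.

Lemma CS (a b : 'I_m -> R) :
  (\sum_i a i * b i) ^+ 2 <= (\sum_i a i ^+ 2) * (\sum_i b i ^+ 2).
Proof.
have H : 0 <= \sum_i \sum_j (a i * b j - a j * b i) ^+ 2.
  by apply: sumr_ge0 => i _; apply: sumr_ge0 => j _; apply: sqr_ge0.
have E1 : \sum_i \sum_j (a i * b j - a j * b i) ^+ 2 =
   \sum_i \sum_j (a i ^+ 2 * b j ^+ 2) + \sum_i \sum_j (a j ^+ 2 * b i ^+ 2)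
   - 2 * \sum_i \sum_j (a i * b i * (a j * b j)).
  rewrite mulr_sumr -big_split -sumrB /=; apply: eq_bigr => i _.
  rewrite mulr_sumr -big_split -sumrB /=; apply: eq_bigr => j _.
  ring.
have E2 : \sum_i \sum_j (a j ^+ 2 * b i ^+ 2) = \sum_i \sum_j (a i ^+ 2 * b j ^+ 2).
  by rewrite exchange_big.
have E3 : (\sum_i a i ^+ 2) * (\sum_i b i ^+ 2) = \sum_i \sum_j (a i ^+ 2 * b j ^+ 2).
  by rewrite mulr_suml; apply: eq_bigr => i _; rewrite mulr_sumr.
have E4 : (\sum_i a i * b i) ^+ 2 = \sum_i \sum_j (a i * b i * (a j * b j)).
  by rewrite expr2 mulr_suml; apply: eq_bigr => i _; rewrite mulr_sumr.
rewrite E3 E4; rewrite E1 E2 in H; lra.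
Qed.

Lemma dist_tri (x y z : pt) : dist x z <= dist x y + dist y z.
Proof.
set A := sqd x y; set B := sqd y z.
have Hs : sqd x z = A + B + 2 * \sum_i (x ord0 i - y ord0 i) * (y ord0 i - z ord0 i).
  rewrite /A /B /sqd mulr_sumr -!big_split /=; apply: eq_bigr => i _; ring.
have Hcs := CS (fun i => x ord0 i - y ord0 i) (fun i => y ord0 i - z ord0 i).
rewrite /= -/(sqd x y) -/(sqd y z) -/A -/B in Hcs.
set s := \sum_i _ in Hs Hcs.
have Hs2 : s <= dist x y * dist y z.
  rewrite /dist -/A -/B -sqrtrM ?sqd_ge0 //.
  apply: le_trans (ler_norm s) _.
  by rewrite -sqrtr_sqr ler_sqrt // mulr_ge0 // sqd_ge0.
rewrite -[dist x y + dist y z]ger0_norm ?addr_ge0 ?dist_ge0 //.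
rewrite -sqrtr_sqr /dist ler_sqrt ?sqr_ge0 //.
rewrite -/(sqd x z) Hs sqrrD -!/(dist _ _) !dist_sq -/A -/B.
lra.
Qed.


Lemma sum_sq_mean (T : choiceType) (S : {fset T}) (f : T -> R) (mu c : R) :
  \sum_(x <- S) f x = #|`S|%:R * mu ->
  \sum_(x <- S) (f x - mu) ^+ 2 <= \sum_(x <- S) (f x - c) ^+ 2.
Proof.
move=> Hs; rewrite -subr_ge0 -sumrB.
have -> : \sum_(x <- S) ((f x - c) ^+ 2 - (f x - mu) ^+ 2) =
    \sum_(x <- S) (2 * (mu - c) * f x) + \sum_(x <- S) ((c ^+ 2 - mu ^+ 2) * 1).
  by rewrite -big_split; apply: eq_bigr => x _ /=; ring.
rewrite -mulr_sumr -mulr_sumr Hs.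
have -> : \sum_(x <- S) (1 : R) = #|`S|%:R by rewrite card_fset_sum1 natr_sum.
have n0 : 0 <= (#|`S|%:R : R) by apply: ler0n.
have -> : 2 * (mu - c) * (#|`S|%:R * mu) + (c ^+ 2 - mu ^+ 2) * #|`S|%:R
   = #|`S|%:R * (mu - c) ^+ 2 by ring.
by apply: mulr_ge0 => //; apply: sqr_ge0.
Qed.

Lemma centroid_coord (S : {fset pt}) i :
  \sum_(u <- S) u ord0 i = #|`S|%:R * centroid S ord0 i.
Proof.
rewrite /centroid mxE summxE.
have [/eqP/cardfs0_eq -> | nz] := boolP (#|`S| == 0)%N.
  by rewrite big_seq_fset0 mul0r.
by rewrite mulrA mulfV ?mul1r // pnatr_eq0.
Qed.

Lemma cost_le (S : {fset pt}) (c : pt) :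
  cost1 S <= \sum_(u <- S) dist u c ^+ 2.
Proof.
rewrite /cost1.
under eq_bigr do rewrite dist_sq.
under [X in _ <= X]eq_bigr do rewrite dist_sq.
rewrite /sqd exchange_big [X in _ <= X]exchange_big /=.
apply: ler_sum => i _.
have := @sum_sq_mean _ S (fun u : pt => u ord0 i) _ (c ord0 i) (centroid_coord S i).
by [].
Qed.


Lemma opt_closer (P A B : {fset pt}) (w : pt) :
  optimal_2means P A B -> w \in B ->
  dist w (centroid B) <= dist w (centroid A).
Proof.
case=> [[hU hI hA hB] hopt] wB.
have disj x : x \in A -> x \in B -> False.
  move=> xA xB; have : x \in A `&` B by rewrite inE xA xB.
  by rewrite hI inE.
have wA : w \notin A by apply/negP => wA; exact: (disj w wA wB).
have [/eqP Bw | Bw] := boolP (B `\ w == fset0).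
  have hc : #|`B| = 1%N by rewrite (cardfsD1 w B) wB Bw cardfs0.
  have hs : \sum_(u <- B) u = w.
    by rewrite (big_fsetD1 _ wB) Bw big_seq_fset0 Monoid.mulm1.
  by rewrite /centroid hc hs invr1 scale1r dist_xx dist_ge0.
have part : is_2partition P (w |` A) (B `\ w).
  split.
  - rewrite -hU; apply/fsetP => x; rewrite !inE.
    by case: eqVneq => [->|_] /=; rewrite ?wB ?orbT.
  - apply/fsetP => x; rewrite !inE.
    case: eqVneq => [->|_] //=.
    by apply/negP => /andP [xA xB]; case: (disj x xA xB).
  - by apply/fset0Pn; exists w; rewrite !inE eqxx.
  - exact: Bw.
have hle := hopt _ _ part.
have c1 : cost1 (w |` A) <= dist w (centroid A) ^+ 2 + cost1 A.
  by have := cost_le (w |` A) (centroid A); rewrite big_fsetU1.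
have c2 : cost1 B = dist w (centroid B) ^+ 2 + \sum_(u <- B `\ w) dist u (centroid B) ^+ 2.
  by rewrite /cost1 (big_fsetD1 _ wB).
have c3 := cost_le (B `\ w) (centroid B).
have sq : dist w (centroid B) ^+ 2 <= dist w (centroid A) ^+ 2 by lra.
by rewrite -(ler_pXn2r (n:=2)) // nnegrE dist_ge0.
Qed.

Lemma near_lr (P A B : {fset pt}) (x w : pt) :
  optimal_2means P A B -> x \in A -> w \in B -> w \notin HR A B x ->
  dist x w <= dist x (centroid A) / 9%:R.
Proof.
move=> hopt xA wB; rewrite /HR !inE wB /= -ltNge /revenue.
have hc := @opt_closer P A B w hopt wB.
have ht := dist_tri w x (centroid A).
rewrite (distC w x) in ht.
have h0 := dist_ge0 x (centroid A).
have h1 := dist_ge0 x w.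
set M := Num.max _ _.
have hM1 : dist x (centroid A) <= M by rewrite le_max lexx.
have hM2 : M <= dist x w + dist x (centroid A).
  by rewrite ge_max; apply/andP; split; lra.
case: eqP => [_ | M0]; first lra.
have Mpos : 0 < M by rewrite lt_def; apply/andP; split; [apply/eqP | lra].
rewrite gt_min => /orP [h | h]; last lra.
rewrite ltr_pdivrMr // in h.
lra.
Qed.

End Aux.

Theorem mainTheorem5 (R : realType) (m : nat) (P A B : {fset 'rV[R]_m}) :
  optimal_2means P A B ->
  forall u v : 'rV[R]_m,
    low_revenue A B u -> low_revenue A B v ->
    dist u v <= (2%:R / 9%:R) *
                Num.max (dist u (centroid A)) (dist v (centroid A)).
Proof.
move=> hopt u v [uA hu] [vA hv].
have hu' : (#|`HR A B u|%:R < #|`B|%:R / 2%:R :> R)%R.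
  by rewrite ltNge; apply/negP.
have hv' : (#|`HR A B v|%:R < #|`B|%:R / 2%:R :> R)%R.
  by rewrite ltNge; apply/negP.
set C := [fset w in B | (w \notin HR A B u) && (w \notin HR A B v)].
have [/eqP C0 | /fset0Pn [w wC]] := boolP (C == fset0).
  have sub : B `<=` HR A B u `|` HR A B v.
    apply/fsubsetP => w wB.
    have : w \notin C by rewrite C0.
    rewrite !inE wB /= negb_and !negbK => /orP [h|h].
      by rewrite h.
    by rewrite h orbT.
  have c1 := fsubset_leq_card sub.
  have c2 := (leq_card_fsetU (HR A B u) (HR A B v)).1.
  have c3 : (#|`B| <= #|`HR A B u| + #|`HR A B v|)%N by apply: leq_trans c1 c2.
  have : (#|`B|%:R <= #|`HR A B u|%:R + #|`HR A B v|%:R :> R)%R.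
    by rewrite -natrD ler_nat.
  lra.
move: wC; rewrite inE => /andP [wB /andP [nu nv]].
have h1 := @near_lr _ _ P A B u w hopt uA wB nu.
have h2 := @near_lr _ _ P A B v w hopt vA wB nv.
have t := @dist_tri _ _ u w v.
rewrite (@distC _ _ w v) in t.
have m1 : (dist u (centroid A) <= Num.max (dist u (centroid A)) (dist v (centroid A)))%R
  by rewrite le_max lexx.
have m2 : (dist v (centroid A) <= Num.max (dist u (centroid A)) (dist v (centroid A)))%R
  by rewrite le_max lexx orbT.
lra.
Qed.
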